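(* Let $\mathcal M$ be a Hilbert space of $\mathcal Y$-valued functions on the unit ball $\mathbb B^d\subset\mathbb C^d$, and suppose there exist $T_1,\dots,T_d\in\mathcal L(\mathcal M)$ such that for every $f\in\mathcal M$ $$f(\boldsymbol\lambda)-f(0)=\sum_{j=1}^d\lambda_j(T_jf)(\boldsymbol\lambda)\ \ (\boldsymbol\lambda\in\mathbb B^d)\quad\text{and}\quad\sum_{j=1}^d\|T_jf\|^2_{\mathcal M}\le\|f\|^2_{\mathcal M}-\|f(0)\|^2_{\mathcal Y}.$$ Then $\mathcal M$ is isometrically equal to a space $\mathcal H(K^{\mathbf a}_{C,\mathbf A})$ for some contractive pair $(C,\mathbf A)$; consequently $\mathcal M$ is contractively included in the Arveson space $\mathcal H_{\mathcal Y}(k_d)$.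
   Context: For a Hilbert space $\mathcal X$, $C\in\mathcal L(\mathcal X,\mathcal Y)$, $\mathbf A=(A_1,\dots,A_d)\in\mathcal L(\mathcal X)^d$: $(C,\mathbf A)$ is contractive if $C^*C+\sum_jA_j^*A_j\le I$. $\mathcal F_d$: free semigroup of words on $\{1,\dots,d\}$, $\mathbf A^v=A_{i_N}\cdots A_{i_1}$; abelianization $\mathbf a\colon\mathcal F_d\to\mathbb Z^d_+$ counts letter occurrences; $|\mathbf n|=\sum n_k$, $\mathbf n!=\prod n_k!$, $\boldsymbol\lambda^{\mathbf n}=\prod\lambda_k^{n_k}$. Arveson space $\mathcal H_{\mathcal Y}(k_d)$: functions $\sum_{\mathbf n}f_{\mathbf n}\boldsymbol\lambda^{\mathbf n}$ on $\mathbb B^d$ with $\|f\|^2=\sum_{\mathbf n}\frac{\mathbf n!}{|\mathbf n|!}\|f_{\mathbf n}\|^2<\infty$. $\widehat{\mathcal O}^{\mathbf a}_{C,\mathbf A}x=\sum_{\mathbf n}\big(\sum_{v\in\mathbf a^{-1}(\mathbf n)}C\mathbf A^vx\big)\boldsymbol\lambda^{\mathbf n}=C(I-\sum_j\lambda_jA_j)^{-1}x$, $\mathcal G^{\mathbf a}_{C,\mathbf A}=(\widehat{\mathcal O}^{\mathbf a}_{C,\mathbf A})^*\widehat{\mathcal O}^{\mathbf a}_{C,\mathbf A}$, $Q^{\mathbf a}$ the orthogonal projection onto $(\operatorname{Ker}\mathcal G^{\mathbf a}_{C,\mathbf A})^\perp$; $\mathcal H(K^{\mathbf a}_{C,\mathbf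 A})$ is $\operatorname{Ran}\widehat{\mathcal O}^{\mathbf a}_{C,\mathbf A}$ with norm $\|\widehat{\mathcal O}^{\mathbf a}_{C,\mathbf A}x\|=\|Q^{\mathbf a}x\|_{\mathcal X}$ (the reproducing kernel Hilbert space with kernel $C(I-\sum\lambda_jA_j)^{-1}(I-\sum\overline{\zeta_j}A_j^* )^{-1}C^*$). Contractive inclusion: $\mathcal M\subseteq\mathcal H_{\mathcal Y}(k_d)$ and $\|f\|_{\mathcal H_{\mathcal Y}(k_d)}\le\|f\|_{\mathcal M}$. *)

(* Defs.v *)
From HB Require Import structures.
From mathcomp Require Import all_boot all_order all_algebra.
From mathcomp Require Import complex.
From mathcomp Require Import boolp classical_sets reals.
Set Implicit Arguments. Unset Strict Implicit. Unset Printing Implicit Defensive.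
Import Order.TTheory GRing.Theory Num.Theory.
Import ComplexField.
Local Open Scope ring_scope.

Definition csq {R : realType} (z : R[i]) : R := complex.Re (z * conjc z).

Record hilbert (R : realType) := Hilbert {
  hspace :> lmodType R[i];
  hdot : hspace -> hspace -> R[i];
  hdot_linear : forall (a : R[i]) (x y z : hspace),
      hdot (a *: x + y) z = a * hdot x z + hdot y z;
  hdot_sym : forall x y : hspace, hdot y x = conjc (hdot x y);
  hdot_ge0 : forall x : hspace, complex.Im (hdot x x) = 0 /\ 0 <= complex.Re (hdot x x);
  hdot_eq0 : forall x : hspace, hdot x x = 0 -> x = 0;
  hcomplete : forall u : nat -> hspace,
      (forall e : R, 0 < e -> exists N, forall m n, (N <= m)%N -> (N <= n)%N ->
          Num.sqrt (complex.Re (hdot (u m - u n) (u m - u n))) < e) ->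
      exists l : hspace, forall e : R, 0 < e -> exists N, forall n, (N <= n)%N ->
          Num.sqrt (complex.Re (hdot (u n - l) (u n - l))) < e
}.

Definition hnorm {R : realType} {H : hilbert R} (x : H) : R :=
  Num.sqrt (complex.Re (hdot x x)).

Definition bounded_linear {R : realType} {H1 H2 : hilbert R} (T : H1 -> H2) : Prop :=
  (forall (a : R[i]) (x y : H1), T (a *: x + y) = a *: T x + T y) /\
  (exists c : R, forall x : H1, hnorm (T x) <= c * hnorm x).

Definition cpoint (R : realType) (d : nat) := 'I_d -> R[i].
Definition in_ball {R : realType} {d : nat} (lam : cpoint R d) : Prop :=
  \sum_(j < d) csq (lam j) < 1.
Definition cpoint0 {R : realType} {d : nat} : cpoint R d := fun _ => 0.

(* (C, A) contractive: C^*C + sum_j A_j^* A_j <= I, written out as the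
   quadratic-form inequality it means. *)
Definition contractive_pair {R : realType} {d : nat} {X Y : hilbert R}
    (C : X -> Y) (A : 'I_d -> X -> X) : Prop :=
  forall x : X, hnorm (C x) ^+ 2 + \sum_(j < d) hnorm (A j x) ^+ 2 <= hnorm x ^+ 2.

(* (I - sum_j lam_j A_j)^{-1} x : the solution z of z - sum_j lam_j A_j z = x *)
Definition resolvent {R : realType} {d : nat} {X : hilbert R}
    (A : 'I_d -> X -> X) (lam : cpoint R d) (x : X) : X :=
  xget 0 [set z : X | z - \sum_(j < d) (lam j *: A j z) = x].

Definition obsO {R : realType} {d : nat} {X Y : hilbert R}
    (C : X -> Y) (A : 'I_d -> X -> X) (x : X) : cpoint R d -> Y :=
  fun lam => C (resolvent A lam x).

Definition kerO {R : realType} {d : nat} {X Y : hilbert R}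
    (C : X -> Y) (A : 'I_d -> X -> X) : set X :=
  [set x | forall lam, in_ball lam -> obsO C A x lam = 0].

(* orthogonal projection onto S^perp (S a closed subspace): the y with
   y perpendicular to S and x - y in S *)
Definition proj_perp {R : realType} {X : hilbert R} (S : set X) (x : X) : X :=
  xget 0 [set y : X | (forall k, S k -> hdot y k = 0) /\ S (x - y)].

(* Q^a : orthogonal projection onto (Ker G^a_{C,A})^perp = (Ker \hat O)^perp *)
Definition projQ {R : realType} {d : nat} {X Y : hilbert R}
    (C : X -> Y) (A : 'I_d -> X -> X) : X -> X :=
  proj_perp (kerO C A).

(* A Hilbert space M "of Y-valued functions on B^d": evaluation ev is linear
   and injective (elements are determined by their values on the ball). *)
Definition function_space {R : realType} {d : nat} {M Y : hilbert R}
    (ev : M -> cpoint R d -> Y) : Prop :=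
  (forall (a : R[i]) (f g : M) lam, in_ball lam ->
      ev (a *: f + g) lam = a *: ev f lam + ev g lam) /\
  (forall f g : M, (forall lam, in_ball lam -> ev f lam = ev g lam) -> f = g).

Definition isometrically_equal_HK {R : realType} {d : nat} {M X Y : hilbert R}
    (ev : M -> cpoint R d -> Y) (C : X -> Y) (A : 'I_d -> X -> X) : Prop :=
  (forall f : M, exists x : X, forall lam, in_ball lam -> ev f lam = obsO C A x lam) /\
  (forall x : X, exists f : M, forall lam, in_ball lam -> ev f lam = obsO C A x lam) /\
  (forall (f : M) (x : X), (forall lam, in_ball lam -> ev f lam = obsO C A x lam) ->
      hnorm f = hnorm (projQ C A x)).

Definition mindex (d : nat) := 'I_d -> nat.
Definition mabs {d} (n : mindex d) : nat := (\sum_(k < d) n k)%N.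
Definition mfact {d} (n : mindex d) : nat := (\prod_(k < d) (n k)`!)%N.
Definition mpow {R : realType} {d} (lam : cpoint R d) (n : mindex d) : R[i] :=
  \prod_(k < d) lam k ^+ n k.

Definition sum_deg_le {V : nmodType} (d N : nat) (F : mindex d -> V) : V :=
  \sum_(m : {ffun 'I_d -> 'I_N.+1} | (\sum_(k < d) (m k : nat) <= N)%N)
     F (fun k => nat_of_ord (m k)).

(* g(lam) = sum_n c_n lam^n  (convergence of the homogeneous expansion) *)
Definition power_series_at {R : realType} {d : nat} {Y : hilbert R}
    (c : mindex d -> Y) (lam : cpoint R d) (y : Y) : Prop :=
  forall e : R, 0 < e -> exists N0, forall N, (N0 <= N)%N ->
    hnorm (y - sum_deg_le N (fun n => mpow lam n *: c n)) < e.

(* partial sums of ||g||^2_{H(k_d)} = sum_n n!/|n|! ||c_n||^2 *)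
Definition arveson_partial {R : realType} {d : nat} {Y : hilbert R}
    (c : mindex d -> Y) (N : nat) : R :=
  sum_deg_le N (fun n => ((mfact n)%:R / ((mabs n)`!)%:R) * hnorm (c n) ^+ 2).

Definition contractively_included_arveson {R : realType} {d : nat} {M Y : hilbert R}
    (ev : M -> cpoint R d -> Y) : Prop :=
  forall f : M, exists c : mindex d -> Y,
    (forall lam, in_ball lam -> power_series_at c lam (ev f lam)) /\
    (forall N, arveson_partial c N <= hnorm f ^+ 2).

(* Main.v *)
Require Import Defs.
From HB Require Import structures.
From mathcomp Require Import all_boot all_order all_algebra.
From mathcomp Require Import complex.
From mathcomp Require Import boolp classical_sets reals.
From mathcomp Require Import ring lra zify.
Set Implicit Arguments. Unset Strict Implicit. Unset Printing Implicit Defensive.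
Import Order.TTheory GRing.Theory Num.Theory.
Import ComplexField.
Local Open Scope ring_scope.
Local Open Scope complex_scope.

Section ComplexBasics.
Variable R : realType.
Implicit Types (a b : R[i]) (s t : R).

Lemma ReD a b : complex.Re (a + b) = complex.Re a + complex.Re b.
Proof. by case: a; case: b. Qed.
Lemma ReN a : complex.Re (- a) = - complex.Re a.
Proof. by case: a. Qed.
Lemma ReB a b : complex.Re (a - b) = complex.Re a - complex.Re b.
Proof. by rewrite ReD ReN. Qed.
Lemma Re0 : complex.Re (0 : R[i]) = 0. Proof. by []. Qed.
Lemma Re_sum (I : Type) (r : seq I) (F : I -> R[i]) :
  complex.Re (\sum_(i <- r) F i) = \sum_(i <- r) complex.Re (F i).
Proof.
elim: r => [|i r IH]; first by rewrite !big_nil.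
by rewrite !big_cons ReD IH.
Qed.
Lemma Re_conj a : complex.Re (conjc a) = complex.Re a.
Proof. by case: a. Qed.
Lemma ReMr t a : complex.Re (t%:C * a) = t * complex.Re a.
Proof. case: a => a1 a2 /=; ring. Qed.
Lemma conj_real t : conjc (t%:C) = t%:C.
Proof. by rewrite /conjc /= oppr0. Qed.
Lemma csq_ge0 a : 0 <= csq a.
Proof. case: a => a1 a2; rewrite /csq /=. nra. Qed.
Lemma csq_real t : csq (t%:C) = t ^+ 2.
Proof. rewrite /csq /=; ring. Qed.
Lemma conjD a b : conjc (a + b) = conjc a + conjc b.
Proof. case: a; case: b => /= *; congr (_ +i* _); ring. Qed.
Lemma conjM a b : conjc (a * b) = conjc a * conjc b.
Proof. case: a; case: b => /= *; congr (_ +i* _); ring. Qed.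
Lemma conjN a : conjc (- a) = - conjc a.
Proof. by case: a. Qed.
Lemma conj0 : conjc (0 : R[i]) = 0.
Proof. by rewrite /conjc /= oppr0. Qed.
Definition cabs a : R := Num.sqrt (csq a).
Lemma cabs_ge0 a : 0 <= cabs a. Proof. exact: sqrtr_ge0. Qed.
Lemma cabs2 a : cabs a ^+ 2 = csq a.
Proof. by rewrite sqr_sqrtr // csq_ge0. Qed.
End ComplexBasics.

Section HilbertBasics.
Variables (R : realType) (H : hilbert R).
Implicit Types (x y z : H) (a : R[i]).

Lemma hdotDl x y z : hdot (x + y) z = hdot x z + hdot y z.
Proof. by have := hdot_linear 1 x y z; rewrite scale1r mul1r. Qed.
Lemma hdot0l z : hdot (0 : H) z = 0.
Proof.
have E := hdotDl 0 0 z; rewrite addr0 in E.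
by apply: (@addrI _ (hdot (0 : H) z)); rewrite -E addr0.
Qed.
Lemma hdotZl a x z : hdot (a *: x) z = a * hdot x z.
Proof. by have := hdot_linear a x 0 z; rewrite addr0 hdot0l addr0. Qed.
Lemma hdotNl x z : hdot (- x) z = - hdot x z.
Proof. by rewrite -scaleN1r hdotZl mulN1r. Qed.
Lemma hdotBl x y z : hdot (x - y) z = hdot x z - hdot y z.
Proof. by rewrite hdotDl hdotNl. Qed.
Lemma hdotDr x y z : hdot x (y + z) = hdot x y + hdot x z.
Proof. by rewrite hdot_sym hdotDl conjD -!hdot_sym. Qed.
Lemma hdotZr a x y : hdot x (a *: y) = conjc a * hdot x y.
Proof. by rewrite hdot_sym hdotZl conjM -!hdot_sym. Qed.
Lemma hdot0r z : hdot z (0 : H) = 0.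
Proof. by rewrite hdot_sym hdot0l conj0. Qed.
Lemma hdotNr x z : hdot x (- z) = - hdot x z.
Proof. by rewrite hdot_sym hdotNl conjN -hdot_sym. Qed.
Lemma hdotBr x y z : hdot x (y - z) = hdot x y - hdot x z.
Proof. by rewrite hdotDr hdotNr. Qed.

Lemma hdot_real x : hdot x x = (complex.Re (hdot x x))%:C.
Proof.
case: (hdot_ge0 x) => Him _; move: Him; case: (hdot x x) => a b /= ->.
by [].
Qed.

Lemma hn_ge0 x : 0 <= hnorm x. Proof. exact: sqrtr_ge0. Qed.
Lemma hn2 x : hnorm x ^+ 2 = complex.Re (hdot x x).
Proof. by rewrite sqr_sqrtr // (hdot_ge0 x).2. Qed.
Lemma hn0 : hnorm (0 : H) = 0.
Proof. by rewrite /hnorm hdot0l sqrtr0. Qed.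
Lemma hn_eq0 x : hnorm x = 0 -> x = 0.
Proof.
move=> h; apply: hdot_eq0; rewrite hdot_real -hn2 h.
by rewrite expr0n.
Qed.
Lemma hnN x : hnorm (- x) = hnorm x.
Proof. by rewrite /hnorm hdotNl hdotNr opprK. Qed.
Lemma hnB x y : hnorm (x - y) = hnorm (y - x).
Proof. by rewrite -hnN opprB. Qed.

Lemma hnZ a x : hnorm (a *: x) = cabs a * hnorm x.
Proof.
rewrite /hnorm /cabs -sqrtrM ?csq_ge0 //; congr Num.sqrt.
rewrite hdotZl hdotZr hdot_real.
move: (complex.Re (hdot x x)) => r; case: a => a1 a2; rewrite /csq /=; ring.
Qed.

Lemma hnD2 x y : hnorm (x + y) ^+ 2 =
  hnorm x ^+ 2 + hnorm y ^+ 2 + 2 * complex.Re (hdot x y).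
Proof.
rewrite !hn2 hdotDl !hdotDr !ReD (hdot_sym x y) Re_conj; ring.
Qed.

Lemma hCS x y : complex.Re (hdot x y) <= hnorm x * hnorm y.
Proof.
have [y0|ny0] := eqVneq (hnorm y) 0.
  by rewrite (hn_eq0 y0) hdot0r Re0 hn0 mulr0.
have yp : 0 < hnorm y ^+ 2 by rewrite exprn_gt0 // lt_def ny0 hn_ge0.
set b := complex.Re (hdot x y).
set s := - b / hnorm y ^+ 2.
have Hs : s * hnorm y ^+ 2 = - b by rewrite /s mulrVK // unitfE gt_eqF.
have := hnD2 x ((s%:C) *: y).
rewrite hnZ hdotZr conj_real ReMr exprMn cabs2 csq_real -/b => E.
have H0 : 0 <= hnorm (x + s%:C *: y) ^+ 2 by apply: sqr_ge0.
rewrite E in H0.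
have hx := hn_ge0 x; have hy := hn_ge0 y.
move: H0 Hs; set X := hnorm x; set Y := hnorm y => H0 Hs.
have E2 : Y ^+ 2 * (X ^+ 2 + s ^+ 2 * Y ^+ 2 + 2 * (s * b)) = (X * Y) ^+ 2 - b ^+ 2.
  transitivity ((X * Y) ^+ 2 + (s * Y ^+ 2) ^+ 2 + 2 * b * (s * Y ^+ 2)); first by ring.
  rewrite Hs; ring.
have : 0 <= (X * Y) ^+ 2 - b ^+ 2 by rewrite -E2 mulr_ge0 // ltW.
rewrite subr_ge0 => hb.
have hxy : 0 <= X * Y by rewrite mulr_ge0.
nra.
Qed.

Lemma hnD x y : hnorm (x + y) <= hnorm x + hnorm y.
Proof.
have := hnD2 x y; have := hCS x y.
have := hn_ge0 x; have := hn_ge0 y; have := hn_ge0 (x + y).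
nra.
Qed.

Lemma hn_sum (I : Type) (r : seq I) (F : I -> H) :
  hnorm (\sum_(i <- r) F i) <= \sum_(i <- r) hnorm (F i).
Proof.
elim: r => [|i r IH]; first by rewrite !big_nil hn0.
rewrite !big_cons; apply: le_trans (hnD _ _) _; exact: lerD.
Qed.

End HilbertBasics.

Section RealLemmas.
Variable R : realType.

Lemma le_sqr (p q : R) : 0 <= q -> p ^+ 2 <= q ^+ 2 -> p <= q.
Proof. move=> hq h; nra. Qed.

Lemma CS_seq (I : Type) (r : seq I) (u v : I -> R) :
  (\sum_(i <- r) u i * v i) ^+ 2 <=
  (\sum_(i <- r) u i ^+ 2) * (\sum_(i <- r) v i ^+ 2).
Proof.
set A := \sum_(i <- r) u i ^+ 2; set B := \sum_(i <- r) u i * v i.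
set C := \sum_(i <- r) v i ^+ 2.
have hC : 0 <= C by apply: sumr_ge0 => i _; exact: sqr_ge0.
have hA : 0 <= A by apply: sumr_ge0 => i _; exact: sqr_ge0.
have [C0|Cn0] := eqVneq C 0.
  suff -> : B = 0 by rewrite expr0n /= mulr_ge0.
  rewrite /B; move: C0; rewrite /C; clear hA hC A B C.
  elim: r => [|i r IH]; first by rewrite !big_nil.
  rewrite !big_cons => /eqP; rewrite paddr_eq0 ?sqr_ge0 //; last first.
    by apply: sumr_ge0 => j _; exact: sqr_ge0.
  case/andP => /eqP /eqP; rewrite sqrf_eq0 => /eqP -> /eqP /IH ->.
  by rewrite mulr0 addr0.
have Cp : 0 < C by rewrite lt_def Cn0.
have key : 0 <= \sum_(i <- r) (C * u i - B * v i) ^+ 2.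
  by apply: sumr_ge0 => i _; exact: sqr_ge0.
have E : \sum_(i <- r) (C * u i - B * v i) ^+ 2 = C * (C * A - B ^+ 2).
  transitivity (\sum_(i <- r) (C ^+ 2 * u i ^+ 2 - 2 * C * B * (u i * v i) + B ^+ 2 * v i ^+ 2)).
    by apply: eq_bigr => i _; ring.
  rewrite big_split /= sumrB -!mulr_sumr -/A -/B -/C; ring.
rewrite E in key.
have : 0 <= C * A - B ^+ 2 by rewrite -(pmulr_rge0 _ Cp).
lra.
Qed.

Lemma pow_small (r e : R) : 0 <= r -> r < 1 -> 0 < e ->
  exists N, forall n, (N <= n)%N -> r ^+ n < e.
Proof.
move=> r0 r1 e0.
suff [N hN] : exists N, r ^+ N < e.
  exists N => n hn; apply: le_lt_trans hN.
  exact: (@ler_wiXn2l _ r r0 (ltW r1) n N hn).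
have [->|rn0] := eqVneq r 0; first by exists 1%N; rewrite expr1.
have rp : 0 < r by rewrite lt_def rn0.
set h := r^-1 - 1.
have hp : 0 < h by rewrite /h subr_gt0 invf_gt1.
have bern : forall n, 1 + n%:R * h <= (1 + h) ^+ n.
  elim=> [|n IH]; first by rewrite mul0r addr0 expr0.
  rewrite exprS -nat1r.
  have : 0 <= (1 + h) ^+ n by rewrite exprn_ge0 // addr_ge0 // ltW.
  have : 0 <= n%:R :> R by []. nra.
have rh : r * (1 + h) = 1 by rewrite /h addrC subrK mulfV.
have x0 : 0 <= (h * e)^-1 by rewrite invr_ge0 ltW // mulr_gt0.
have := archi_boundP x0; set N := Num.Def.archi_bound _ => hN.
exists N.
have E1 : r ^+ N * (1 + h) ^+ N = 1 by rewrite -exprMn rh expr1n.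
have B1 := bern N.
have rN : 0 <= r ^+ N by rewrite exprn_ge0 // ltW.
have hNe : 1 < N%:R * (h * e).
  by rewrite -[(h * e)^-1]mul1r ltr_pdivrMr ?mulr_gt0 in hN.
have : r ^+ N * (1 + N%:R * h) <= 1.
  by apply: le_trans (ler_wpM2l rN B1) _; rewrite E1.
have : 0 <= N%:R :> R by [].
nra.
Qed.
End RealLemmas.

Section Lin.
Variable R : realType.
Definition islin (U V : lmodType R[i]) (f : U -> V) :=
  forall (a : R[i]) x y, f (a *: x + y) = a *: f x + f y.

Variables (U V : lmodType R[i]) (f : U -> V).
Hypothesis hf : islin f.
Lemma linD x y : f (x + y) = f x + f y.
Proof. by have := hf 1 x y; rewrite !scale1r. Qed.
Lemma lin0 : f 0 = 0.
Proof.
have E := linD 0 0; rewrite addr0 in E.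
by apply: (@addrI _ (f 0)); rewrite -E addr0.
Qed.
Lemma linZ a x : f (a *: x) = a *: f x.
Proof. by have := hf a x 0; rewrite !addr0 lin0 addr0. Qed.
Lemma linN x : f (- x) = - f x.
Proof. by rewrite -scaleN1r linZ scaleN1r. Qed.
Lemma linB x y : f (x - y) = f x - f y.
Proof. by rewrite linD linN. Qed.
Lemma lin_sum (I : Type) (r : seq I) (F : I -> U) :
  f (\sum_(i <- r) F i) = \sum_(i <- r) f (F i).
Proof.
elim: r => [|i r IH]; first by rewrite !big_nil lin0.
by rewrite !big_cons linD IH.
Qed.
End Lin.

Lemma zsplit (V : zmodType) (x y z : V) : x - z = (x - y) + (y - z).
Proof. by rewrite addrA subrK. Qed.
Lemma zid1 (V : zmodType) (a b c d e : V) : a - b - c = (a - d) + ((d - e - c) + (e - b)).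
Proof.
rewrite -addrA (addrC (d - e)) -(addrA (-c)) -addrA (addrC (-c)) addrA.
rewrite -!addrA (addrA (-e)) addNr add0r addrA.
by rewrite addKr addrA.
Qed.
Lemma zid2 (V : zmodType) (s ln f : V) : s - (s + ln - f) - f = - ln.
Proof. by rewrite opprB addrA (addrC s f) addrKA addrAC subrr add0r. Qed.

Lemma small0 (R : realType) (x : R) : 0 <= x -> (forall e, 0 < e -> x <= e) -> x = 0.
Proof.
move=> x0 h; apply/eqP; rewrite eq_le x0 andbT leNgt; apply/negP => xp.
have := h (x / 2) (divr_gt0 xp (ltr0Sn _ 1)).
by move=> H; lra.
Qed.

Section Neumann.
Variables (R : realType) (d : nat) (M : hilbert R) (T : 'I_d -> M -> M).
Hypothesis Tlin : forall j, islin (T j).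
Hypothesis Tcontr : forall z : M, \sum_(j < d) hnorm (T j z) ^+ 2 <= hnorm z ^+ 2.
Variable lam : cpoint R d.
Hypothesis lamB : in_ball lam.

Definition Lop (z : M) : M := \sum_(j < d) (lam j *: T j z).
Definition rr : R := Num.sqrt (\sum_(j < d) csq (lam j)).

Lemma Lop_lin : islin Lop.
Proof.
move=> a x y; rewrite /Lop scaler_sumr -big_split /=; apply: eq_bigr => j _.
by rewrite (Tlin j) scalerDr !scalerA mulrC.
Qed.

Lemma rr_ge0 : 0 <= rr. Proof. exact: sqrtr_ge0. Qed.
Lemma rr_lt1 : rr < 1.
Proof.
by rewrite /rr -sqrtr1 ltr_sqrt ?ltr01 //; exact: lamB.
Qed.

Lemma Lop_bound z : hnorm (Lop z) <= rr * hnorm z.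
Proof.
rewrite /Lop; apply: le_trans (hn_sum _ _) _.
under eq_bigr do rewrite hnZ.
apply: le_sqr; first by rewrite mulr_ge0 ?rr_ge0 ?hn_ge0.
apply: le_trans (CS_seq _ _ _) _.
rewrite exprMn /rr sqr_sqrtr; last by apply: sumr_ge0 => j _; exact: csq_ge0.
under eq_bigr do rewrite cabs2.
apply: ler_wpM2l; first by apply: sumr_ge0 => j _; exact: csq_ge0.
exact: Tcontr.
Qed.

Lemma Lpow_lin k : islin (fun f => iter k Lop f).
Proof.
elim: k => [//|k IH] a x y /=; rewrite IH; exact: Lop_lin.
Qed.

Lemma Lpow_bound k f : hnorm (iter k Lop f) <= rr ^+ k * hnorm f.
Proof.
elim: k => [|k IH]; first by rewrite expr0 mul1r.
rewrite iterS; apply: le_trans (Lop_bound _) _.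
by rewrite exprS -mulrA ler_wpM2l // rr_ge0.
Qed.

Definition Spart f n := \sum_(0 <= k < n) iter k Lop f.

Lemma geom n p : (1 - rr) * \sum_(n <= k < n + p) rr ^+ k = rr ^+ n - rr ^+ (n + p).
Proof.
elim: p => [|p IH]; first by rewrite addn0 big_geq // mulr0 subrr.
rewrite addnS big_nat_recr ?leq_addr //= mulrDr IH exprS; ring.
Qed.

Lemma Spart_diff f n p : hnorm (Spart f (n + p) - Spart f n) * (1 - rr) <= rr ^+ n * hnorm f.
Proof.
rewrite /Spart (@big_cat_nat _ _ _ n 0%N (n + p)) ?leq_addr //= (addrC (\sum_(0 <= i < n) _)) addrK.
have h1 : 0 <= 1 - rr by rewrite subr_ge0 ltW // rr_lt1.
apply: le_trans (ler_wpM2r h1 (hn_sum _ _)) _.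
apply: le_trans (ler_wpM2r h1 (ler_sum _ (fun k _ => Lpow_bound k f))) _.
rewrite -mulr_suml mulrC mulrA geom.
have := hn_ge0 f; have : 0 <= rr ^+ (n + p) by rewrite exprn_ge0 // rr_ge0.
nra.
Qed.

Lemma Spart_L f n : Spart f n - Lop (Spart f n) - f = - iter n Lop f.
Proof.
have -> : Lop (Spart f n) = Spart f n + iter n Lop f - f.
  rewrite /Spart -big_nat_recr //= big_nat_recl //= (addrC f) addrK.
  by rewrite (lin_sum Lop_lin).
exact: zid2.
Qed.

Lemma neumann (f : M) : exists l, l - Lop l = f /\
  forall e, 0 < e -> exists N, forall n, (N <= n)%N -> hnorm (Spart f n - l) < e.
Proof.
have hf := hn_ge0 f.
have q0 : 0 < 1 - rr by rewrite subr_gt0 rr_lt1.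
have cauchy : forall e, 0 < e -> exists N, forall m n, (N <= m)%N -> (N <= n)%N ->
    hnorm (Spart f m - Spart f n) < e.
  move=> e e0.
  have e'0 : 0 < e * (1 - rr) / (hnorm f + 1) by rewrite divr_gt0 ?mulr_gt0 // ltr_wpDl.
  have [N hN] := pow_small rr_ge0 rr_lt1 e'0.
  exists N.
  suff key : forall m n, (N <= n)%N -> (n <= m)%N -> hnorm (Spart f m - Spart f n) < e.
    move=> m n hm hn; have [nm|mn] := leqP n m; first exact: key.
    by rewrite hnB; apply: key => //; exact: ltnW.
  move=> m n hn nm; rewrite -(subnKC nm).
  have A := Spart_diff f n (m - n).
  have B := hN n hn.
  have C : e * (1 - rr) / (hnorm f + 1) * (hnorm f + 1) = e * (1 - rr).
    by rewrite mulfVK // gt_eqF // ltr_wpDl.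
  rewrite -(ltr_pM2r q0).
  apply: le_lt_trans A _.
  have rn0 : 0 <= rr ^+ n by rewrite exprn_ge0 // rr_ge0.
  move: B C; set E := _ / _ => B C.
  rewrite -C; nra.
have [l hl] := hcomplete cauchy.
exists l; split; last exact: hl.
apply/eqP; rewrite -subr_eq0; apply/eqP; apply: hn_eq0.
apply: small0; first exact: hn_ge0.
move=> e e0.
have e3 : 0 < e / 3 by rewrite divr_gt0.
have [N1 hN1] := hl _ e3.
have e'0 : 0 < e / 3 / (hnorm f + 1) by rewrite divr_gt0 // ltr_wpDl.
have [N2 hN2] := pow_small rr_ge0 rr_lt1 e'0.
set n := maxn N1 N2.
have A : hnorm (Spart f n - l) < e / 3 := hN1 n (leq_maxl _ _).
have B := hN2 n (leq_maxr _ _).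
rewrite (zid1 l (Lop l) f (Spart f n) (Lop (Spart f n))) Spart_L.
rewrite -(linB Lop_lin).
apply: le_trans (hnD _ _) _.
apply: le_trans (lerD (lexx _) (hnD _ _)) _.
rewrite hnN hnB.
have C1 := Lpow_bound n f.
have C2 := Lop_bound (Spart f n - l).
have C : e / 3 / (hnorm f + 1) * (hnorm f + 1) = e / 3.
  by rewrite mulfVK // gt_eqF // ltr_wpDl.
move: B C; set E := _ / (_ + 1) => B C.
have rn0 : 0 <= rr ^+ n by rewrite exprn_ge0 // rr_ge0.
have r1 := rr_lt1; have r0 := rr_ge0.
have h0 := hn_ge0 (Spart f n - l).
nra.
Qed.
End Neumann.

Section Words.
Variable d : nat.

Fixpoint Wlist (k : nat) : seq (seq 'I_d) :=
  if k is k'.+1 then [seq j :: w | j <- index_enum 'I_d, w <- Wlist k'] else [:: [::]].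
Definition Wsum (V : nmodType) k (F : seq 'I_d -> V) : V := \sum_(w <- Wlist k) F w.

Lemma Wsum0 (V : nmodType) (F : seq 'I_d -> V) : Wsum 0 F = F [::].
Proof. by rewrite /Wsum /= big_seq1. Qed.
Lemma WsumS (V : nmodType) k (F : seq 'I_d -> V) :
  Wsum k.+1 F = \sum_(j < d) Wsum k (fun w => F (j :: w)).
Proof. by rewrite /Wsum /= big_allpairs_dep. Qed.
Lemma Wsum_ext (V : nmodType) k (F G : seq 'I_d -> V) :
  (forall w, size w = k -> F w = G w) -> Wsum k F = Wsum k G.
Proof.
elim: k F G => [|k IH] F G h; first by rewrite !Wsum0 h.
rewrite !WsumS; apply: eq_bigr => j _; apply: IH => w hw; apply: h => /=.
by rewrite hw.
Qed.

Lemma sum_count (w : seq 'I_d) : (\sum_(k < d) count_mem k w)%N = size w.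
Proof.
elim: w => [|j w IH] /=; first by rewrite big1.
rewrite big_split /= IH (bigD1 j) //= eqxx big1 ?add1n // => k.
by rewrite eq_sym => /negbTE ->.
Qed.

Definition eqa (w : seq 'I_d) (n : mindex d) : bool := [forall k, count_mem k w == n k].

Lemma eqa_size w n : eqa w n -> mabs n = size w.
Proof.
move/forallP => h; rewrite /mabs -sum_count; apply: eq_bigr => k _.
by rewrite (eqP (h k)).
Qed.

Lemma pick_unique (V : nmodType) N (w : seq 'I_d) (x : V) : (size w <= N)%N ->
  \sum_(m : {ffun 'I_d -> 'I_N.+1} | (\sum_(k < d) (m k : nat) <= N)%N)
     (if eqa w (fun k => nat_of_ord (m k)) then x else 0) = x.
Proof.
move=> hw.
pose m0 : {ffun 'I_d -> 'I_N.+1} := [ffun k => inord (count_mem k w)].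
have m0E k : (m0 k : nat) = count_mem k w.
  by rewrite ffunE inordK // ltnS (leq_trans (count_size _ _) hw).
have Pm0 : (\sum_(k < d) (m0 k : nat) <= N)%N.
  by under eq_bigr do rewrite m0E; rewrite sum_count.
have e0 : eqa w (fun k => nat_of_ord (m0 k)) by apply/forallP => k; rewrite m0E.
rewrite (bigD1 m0) //= e0 big1 ?addr0 // => m /andP [_ ne].
case: ifP => // /forallP h; exfalso; move/eqP: ne; apply.
apply/ffunP => k; apply/val_inj; rewrite /= m0E; exact/esym/eqP/h.
Qed.

Lemma reindex_deg (V : nmodType) N (F : seq 'I_d -> V) :
  sum_deg_le N (fun n => Wsum (mabs n) (fun w => if eqa w n then F w else 0)) =
  \sum_(k < N.+1) Wsum k F.
Proof.
rewrite /sum_deg_le; symmetry.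
transitivity (\sum_(k < N.+1) \sum_(m : {ffun 'I_d -> 'I_N.+1} | (\sum_(k < d) (m k : nat) <= N)%N)
   Wsum k (fun w => if eqa w (fun k => nat_of_ord (m k)) then F w else 0)).
  apply: eq_bigr => k _.
  rewrite [RHS](_ : _ = Wsum k (fun w => \sum_(m : {ffun 'I_d -> 'I_N.+1} | (\sum_(k < d) (m k : nat) <= N)%N)
      (if eqa w (fun k => nat_of_ord (m k)) then F w else 0))); last by rewrite /Wsum exchange_big.
  apply: Wsum_ext => w hw; rewrite pick_unique // hw -ltnS; exact: ltn_ord.
rewrite exchange_big; apply: eq_bigr => m Pm.
set n := fun k => nat_of_ord (m k).
have Pn : (mabs n <= N)%N by [].
rewrite (bigD1 (inord (mabs n))) //= inordK ?ltnS // big1 ?addr0 // => k hk.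
rewrite (@Wsum_ext _ _ _ (fun=> 0)); first by rewrite /Wsum big1.
move=> w hw; case: ifP => // /eqa_size; rewrite hw => hn; exfalso.
move/eqP: hk; apply; apply/val_inj; by rewrite /= inordK // hn ltn_ord.
Qed.

Definition dec (n : mindex d) (j : 'I_d) : mindex d := fun i => (n i - (i == j))%N.

Lemma eqa_cons j w n : eqa (j :: w) n = (0 < n j)%N && eqa w (dec n j).
Proof.
apply/forallP/andP => [h|[hj /forallP h] i].
  have h' i : ((j == i) + count_mem i w)%N = n i by exact: (eqP (h i)).
  split; first by rewrite -h' eqxx.
  by apply/forallP => i; rewrite /dec -h' (eq_sym i j) addKn.
have := eqP (h i); rewrite /dec /= => ->.
case: (eqVneq i j) => [->|nij] /=; first by rewrite add1n subn1 prednK.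
by rewrite add0n subn0.
Qed.

Lemma mfact_dec n j : (0 < n j)%N -> mfact n = (n j * mfact (dec n j))%N.
Proof.
move=> hj; rewrite /mfact (bigD1 j) //= [in RHS](bigD1 j) //= /dec eqxx mulnA.
rewrite -{1}(prednK hj) factS prednK // subn1; congr (_ * _)%N.
by apply: eq_bigr => i /negbTE ->; rewrite subn0.
Qed.

Lemma mabs_dec n j : (0 < n j)%N -> mabs n = (mabs (dec n j)).+1.
Proof.
move=> hj; rewrite /mabs (bigD1 j) //= [in RHS](bigD1 j) //= /dec eqxx.
have -> : (\sum_(i < d | i != j) (n i - (i == j))%N = \sum_(i < d | i != j) n i)%N.
  by apply: eq_bigr => i /negbTE ->; rewrite subn0.
by rewrite -addSn subn1 prednK.
Qed.

Lemma multinom (R : realType) k (n : mindex d) : mabs n = k ->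
  Wsum k (fun w => if eqa w n then 1 else 0 : R) * (mfact n)%:R = (k`!)%:R.
Proof.
elim: k n => [|k IH] n hn.
  have n0 : forall i, n i = 0%N.
    move=> i; move/eqP: hn; rewrite /mabs sum_nat_eq0 => /forallP /(_ i) /eqP.
    exact.
  rewrite Wsum0.
  have -> : eqa [::] n by apply/forallP => i; rewrite n0.
  rewrite /mfact big1 ?mul1r // => i _; by rewrite n0.
rewrite WsumS mulr_suml.
transitivity (\sum_(j < d) (k`!)%:R * (n j)%:R : R).
  apply: eq_bigr => j _.
  have [hj|hj] := posnP (n j).
    rewrite (@Wsum_ext _ _ _ (fun=> 0)); first by rewrite /Wsum big1 // mul0r hj mulr0.
    by move=> w _; rewrite eqa_cons hj.
  rewrite (@Wsum_ext _ _ _ (fun w => if eqa w (dec n j) then 1 else 0)); last first.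
    by move=> w _; rewrite eqa_cons hj.
  rewrite (mfact_dec hj) natrM mulrCA (IH (dec n j)) 1?mulrC //.
  by move: hn; rewrite (mabs_dec hj) => -[].
rewrite -mulr_sumr -natr_sum factS natrM mulrC; congr (_ * _).
by rewrite -hn.
Qed.
End Words.

Section Main.
Variables (R : realType) (d : nat) (Y M : hilbert R) (ev : M -> cpoint R d -> Y).
Hypothesis Hfun : function_space ev.
Variable T : 'I_d -> M -> M.
Hypothesis HT : forall j, bounded_linear (T j).
Hypothesis Hrec : forall (f : M) (lam : cpoint R d), in_ball lam ->
        ev f lam - ev f cpoint0 = \sum_(j < d) (lam j *: ev (T j f) lam).
Hypothesis Hcontr : forall f : M,
        \sum_(j < d) hnorm (T j f) ^+ 2 <= hnorm f ^+ 2 - hnorm (ev f cpoint0) ^+ 2.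

Definition C0 (f : M) : Y := ev f cpoint0.

Lemma ball0 : in_ball (@cpoint0 R d).
Proof. by rewrite /in_ball big1 ?ltr01 // => j _; rewrite /csq /cpoint0 mul0r. Qed.

Lemma evlin lam : in_ball lam -> islin (fun f => ev f lam).
Proof. by move=> hl a f g; exact: Hfun.1. Qed.
Lemma evsum lam (hl : in_ball lam) (I : Type) (r : seq I) (F : I -> M) :
  ev (\sum_(i <- r) F i) lam = \sum_(i <- r) ev (F i) lam.
Proof. exact: (lin_sum (evlin hl)). Qed.
Lemma evZ lam (hl : in_ball lam) a f : ev (a *: f) lam = a *: ev f lam.
Proof. exact: (linZ (evlin hl)). Qed.
Lemma evB lam (hl : in_ball lam) f g : ev (f - g) lam = ev f lam - ev g lam.
Proof. exact: (linB (evlin hl)). Qed.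
Lemma ev0 lam (hl : in_ball lam) : ev 0 lam = 0.
Proof. exact: (lin0 (evlin hl)). Qed.

Lemma Tlin j : islin (T j). Proof. exact: (HT j).1. Qed.
Lemma Tcontr z : \sum_(j < d) hnorm (T j z) ^+ 2 <= hnorm z ^+ 2.
Proof. have := Hcontr z; have := sqr_ge0 (hnorm (ev z cpoint0)); lra. Qed.
Lemma C0_bound f : hnorm (C0 f) <= hnorm f.
Proof.
apply: le_sqr; first exact: hn_ge0.
have := Hcontr f; have : 0 <= \sum_(j < d) hnorm (T j f) ^+ 2.
  by apply: sumr_ge0 => j _; exact: sqr_ge0.
rewrite /C0; lra.
Qed.

Lemma key lam z f : in_ball lam -> z - Lop T lam z = f -> ev z cpoint0 = ev f lam.
Proof.
move=> hl hz; have := Hrec z hl.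
have -> : \sum_(j < d) (lam j *: ev (T j z) lam) = ev (Lop T lam z) lam.
  by rewrite /Lop (evsum hl); apply: eq_bigr => j _; rewrite (evZ hl).
have -> : Lop T lam z = z - f by rewrite -hz opprB addrC subrK.
rewrite (evB hl) => E.
by apply: oppr_inj; apply: (@addrI _ (ev z lam)).
Qed.

Lemma obsO_ev lam f : in_ball lam -> obsO C0 T f lam = ev f lam.
Proof.
move=> hl; have [l [hl1 _]] := neumann Tlin Tcontr hl f.
rewrite /obsO /resolvent /C0.
have hP := @xgetPex M 0 [set z : M | z - \sum_(j < d) (lam j *: T j z) = f] (ex_intro _ l hl1).
exact: (key hl hP).
Qed.


Lemma kerO0 k : kerO C0 T k -> k = 0.
Proof.
move=> hk; apply: Hfun.2 => lam hl; rewrite (ev0 hl) -(obsO_ev k hl); exact: hk.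
Qed.

Lemma projQ_id x : projQ C0 T x = x.
Proof.
rewrite /projQ /proj_perp; apply: xget_unique.
  split; first by move=> k /kerO0 ->; rewrite hdot0r.
  by rewrite subrr => lam hl; rewrite obsO_ev // ev0.
move=> y [_ /kerO0 /eqP]; rewrite subr_eq0 => /eqP ->. done.
Qed.

Lemma part1 : exists (X : hilbert R) (C : X -> Y) (A : 'I_d -> X -> X),
      bounded_linear C /\ (forall j, bounded_linear (A j)) /\
      contractive_pair C A /\ isometrically_equal_HK ev C A.
Proof.
exists M, C0, T; split; [|split; [exact: HT|split]].
- split; first by move=> a x y; exact: (evlin ball0).
  by exists 1 => x; rewrite mul1r; exact: C0_bound.
- by move=> x; have := Hcontr x; rewrite /C0; lra.
- split; [|split].
  + by move=> f; exists f => lam hl; rewrite obsO_ev.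
  + by move=> x; exists x => lam hl; rewrite obsO_ev.
  + move=> f x h; rewrite projQ_id; congr hnorm; apply: Hfun.2 => lam hl.
    by rewrite h // obsO_ev.
Qed.


Definition Tw (w : seq 'I_d) (f : M) : M := foldl (fun g j => T j g) f w.
Definition lamw (lam : cpoint R d) (w : seq 'I_d) : R[i] := mpow lam (fun k => count_mem k w).
Definition coef (f : M) (n : mindex d) : Y :=
  Wsum (mabs n) (fun w => if eqa w n then C0 (Tw w f) else 0).

Lemma lamw_nil lam : lamw lam [::] = 1.
Proof. by rewrite /lamw /mpow big1 // => k _; rewrite expr0. Qed.
Lemma lamw_cons lam j w : lamw lam (j :: w) = lam j * lamw lam w.
Proof.
rewrite /lamw /mpow /=.
under eq_bigr => k _ do rewrite exprD.
rewrite big_split /=; congr (_ * _).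
rewrite (bigD1 j) //= eqxx expr1 big1 ?mulr1 // => k.
by rewrite eq_sym => /negbTE ->; rewrite expr0.
Qed.

Lemma homog lam k f : Wsum k (fun w => lamw lam w *: Tw w f) = iter k (Lop T lam) f.
Proof.
elim: k f => [|k IH] f; first by rewrite Wsum0 lamw_nil scale1r.
rewrite WsumS iterSr.
have -> : iter k (Lop T lam) (Lop T lam f) = \sum_(j < d) lam j *: iter k (Lop T lam) (T j f).
  rewrite /Lop (lin_sum (Lpow_lin Tlin lam k)); apply: eq_bigr => j _.
  exact: (linZ (Lpow_lin Tlin lam k)).
apply: eq_bigr => j _; rewrite -IH /Wsum scaler_sumr; apply: eq_bigr => w _.
by rewrite lamw_cons scalerA.
Qed.

Lemma series_part lam f N :
  sum_deg_le N (fun n => mpow lam n *: coef f n) = C0 (Spart T lam f N.+1).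
Proof.
transitivity (sum_deg_le N (fun n => Wsum (mabs n)
    (fun w => if eqa w n then lamw lam w *: C0 (Tw w f) else 0))).
  rewrite /sum_deg_le; apply: eq_bigr => m _; rewrite /coef /Wsum scaler_sumr.
  apply: eq_bigr => w _; case: ifP => h; last by rewrite scaler0.
  congr (_ *: _); rewrite /lamw; congr mpow; apply: funext => k.
  exact/esym/eqP/(forallP h k).
rewrite reindex_deg /Spart big_mkord /C0 (evsum ball0); apply: eq_bigr => k _.
rewrite -homog /Wsum (evsum ball0); apply: eq_bigr => w _.
by rewrite (evZ ball0).
Qed.

Lemma series_conv lam f : in_ball lam -> power_series_at (coef f) lam (ev f lam).
Proof.
move=> hl e e0.
have [l [hl1 hl2]] := neumann Tlin Tcontr hl f.
have [N hN] := hl2 e e0.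
exists N => n hn; rewrite series_part -(key hl hl1) -/(C0 l).
rewrite /C0 -(evB ball0) -/(C0 _).
apply: le_lt_trans (C0_bound _) _.
by rewrite -hnN opprB; apply: hN; exact: leqW.
Qed.


Lemma coef_bound f n :
  (mfact n)%:R / ((mabs n)`!)%:R * hnorm (coef f n) ^+ 2 <=
  Wsum (mabs n) (fun w => if eqa w n then hnorm (C0 (Tw w f)) ^+ 2 else 0).
Proof.
set k := mabs n.
set P := Wsum k (fun w => if eqa w n then hnorm (C0 (Tw w f)) else 0).
set Q := Wsum k (fun w => if eqa w n then hnorm (C0 (Tw w f)) ^+ 2 else 0).
set cnt := Wsum k (fun w => if eqa w n then 1 else 0 : R).
have h1 : hnorm (coef f n) <= P.
  apply: le_trans (hn_sum _ _) _; apply: ler_sum => w _.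
  by case: ifP => _ //; rewrite hn0.
have h2 : P ^+ 2 <= cnt * Q.
  have := CS_seq (Wlist d k) (fun w => if eqa w n then 1 else 0 : R)
     (fun w => if eqa w n then hnorm (C0 (Tw w f)) else 0).
  have -> : \sum_(i <- Wlist d k) (if eqa i n then 1 else 0) *
      (if eqa i n then hnorm (C0 (Tw i f)) else 0) = P.
    by apply: eq_bigr => w _; case: ifP; rewrite ?mul1r ?mul0r.
  have -> : \sum_(i <- Wlist d k) (if eqa i n then 1 else 0 : R) ^+ 2 = cnt.
    by apply: eq_bigr => w _; case: ifP; rewrite ?expr1n ?expr0n.
  have -> : \sum_(i <- Wlist d k) (if eqa i n then hnorm (C0 (Tw i f)) else 0) ^+ 2 = Q.
    by apply: eq_bigr => w _; case: ifP; rewrite ?expr0n.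
  done.
have h3 := multinom R (erefl k).
have kp : 0 < (k`!)%:R :> R by rewrite ltr0n fact_gt0.
have a0 : 0 <= (mfact n)%:R :> R by [].
have H0 := hn_ge0 (coef f n).
have hsq : hnorm (coef f n) ^+ 2 <= P ^+ 2 by nra.
rewrite mulrAC ler_pdivrMr // -h3 -/cnt.
move: hsq h2 a0; set a := (mfact n)%:R; set hc := hnorm (coef f n) ^+ 2 => hsq h2 a0.
nra.
Qed.

Lemma telescope N f :
  \sum_(k < N) Wsum k (fun w => hnorm (C0 (Tw w f)) ^+ 2) <= hnorm f ^+ 2.
Proof.
elim: N f => [|N IH] f; first by rewrite big_ord0 sqr_ge0.
rewrite big_ord_recl Wsum0 /=.
have -> : \sum_(i < N) Wsum (bump 0 i) (fun w => hnorm (C0 (Tw w f)) ^+ 2) =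
    \sum_(j < d) \sum_(i < N) Wsum i (fun w => hnorm (C0 (Tw w (T j f))) ^+ 2).
  rewrite exchange_big /=; apply: eq_bigr => i _.
  by rewrite /bump leq0n add1n WsumS.
apply: le_trans (lerD (lexx _) (ler_sum _ (fun j _ => IH (T j f)))) _.
have := Hcontr f; rewrite /C0 /Tw /=; lra.
Qed.

Lemma part2 : contractively_included_arveson ev.
Proof.
move=> f; exists (coef f); split; first by move=> lam hl; exact: series_conv.
move=> N; rewrite /arveson_partial.
apply: le_trans (_ : _ <= sum_deg_le N (fun n => Wsum (mabs n)
   (fun w => if eqa w n then hnorm (C0 (Tw w f)) ^+ 2 else 0))) _.
  by rewrite /sum_deg_le; apply: ler_sum => m _; exact: coef_bound.
rewrite reindex_deg; exact: telescope.
Qed.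

End Main.

Local Close Scope complex_scope.
Unset Implicit Arguments.
Set Strict Implicit.

Theorem theorem3p21 (R : realType) (d : nat) (Y M : hilbert R)
    (ev : M -> cpoint R d -> Y)
    (Hfun : function_space ev)
    (T : 'I_d -> M -> M)
    (HT : forall j, bounded_linear (T j))
    (Hrec : forall (f : M) (lam : cpoint R d), in_ball lam ->
        ev f lam - ev f cpoint0 = \sum_(j < d) (lam j *: ev (T j f) lam))
    (Hcontr : forall f : M,
        \sum_(j < d) hnorm (T j f) ^+ 2 <= hnorm f ^+ 2 - hnorm (ev f cpoint0) ^+ 2) :
  (exists (X : hilbert R) (C : X -> Y) (A : 'I_d -> X -> X),
      bounded_linear C /\ (forall j, bounded_linear (A j)) /\
      contractive_pair C A /\ isometrically_equal_HK ev C A) /\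
  contractively_included_arveson ev.
Proof.
split; first exact: (part1 Hfun HT Hrec Hcontr).
exact: (part2 Hfun HT Hrec Hcontr).
Qed.
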